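(* Let $(\mathbf C,I)$ be a finite-type based chain complex and let $M=\{\alpha\to\beta\}$ be a single $(n+1,n)$-pairing (so $\alpha\in I_{n+1}$, $\beta\in I_n$ and $\partial_{\beta,\alpha}$ is an isomorphism). Then $\operatorname{Im}\partial_n^M=\operatorname{Im}\partial_n$, where $\partial^M$ is the boundary of the Morse complex $\mathbf C^M$ (note $\mathbf C^M_{n-1}=\mathbf C_{n-1}$).
   Context: Based chain complex: chain complex $(\mathbf C,\partial)$ of finite-dimensional real vector spaces with disjoint finite index sets $I_n$ and $\mathbf C_n=\bigoplus_{\alpha\in I_n}C_\alpha$; $\partial_{\tau,\sigma}=\pi_\tau\partial i_\sigma:C_\sigma\to C_\tau$. For the single pairing $M=\{\alpha\to\beta\}$, the Morse complex $\mathbf C^M$ has summands $C_\sigma$ for $\sigma\in I\setminus\{\alpha,\beta\}$ and boundary components $\partial^M_{\tau,\sigma}=\partial_{\tau,\sigma}-\partial_{\tau,\alpha}\partial_{\beta,\alpha}^{-1}\partial_{\beta,\sigma}$. *)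

(* Defs.v *)
From HB Require Import structures.
From mathcomp Require Import all_boot all_order all_algebra.
From mathcomp Require Import reals.
Set Implicit Arguments. Unset Strict Implicit. Unset Printing Implicit Defensive.
Import Order.TTheory GRing.Theory Num.Theory.
Local Open Scope ring_scope.

(* Summands C_s (s : idx) are R^(cdim s) (row vectors); C_n = (+)_{cdeg s = n} C_s.
   [cbd s t] is the component partial_{t,s} : C_s -> C_t, acting on row vectors
   on the right (x |-> x *m cbd s t). *)
Record based_complex (R : realType) := BasedComplex {
  idx : finType;
  cdeg : idx -> int;
  cdim : idx -> nat;
  cbd : forall s t : idx, 'M[R]_(cdim s, cdim t);
  bd_deg : forall s t, cdeg t != cdeg s - 1 -> cbd s t = 0;
  bd_sq : forall s r, \sum_(t : idx) cbd s t *m cbd t r = 0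
}.

Definition bd_image (R : realType) (J : finType) (d : J -> nat) (dg : J -> int)
  (D : forall s t : J, 'M[R]_(d s, d t)) (n : int)
  (y : forall t : J, 'rV[R]_(d t)) : Prop :=
  exists x : forall s : J, 'rV[R]_(d s),
    (forall s, dg s != n -> x s = 0) /\
    (forall t, y t = \sum_(s : J) x s *m D s t).

(* Components partial^M_{t,s} = partial_{t,s} - partial_{t,a} partial_{b,a}^{-1} partial_{b,s}
   for the single pairing a -> b, where g = partial_{b,a}^{-1}. *)
Definition morse_bd (R : realType) (C : based_complex R) (a b : idx C)
  (g : 'M[R]_(cdim b, cdim a)) (s t : idx C) : 'M[R]_(cdim s, cdim t) :=
  cbd s t - cbd s b *m g *m cbd a t.

Definition morse_idx (R : realType) (C : based_complex R) (a b : idx C) : finType :=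
  {s : idx C | (s != a) && (s != b)}.

(* Main.v *)
Require Import Defs.
From HB Require Import structures.
From mathcomp Require Import all_boot all_order all_algebra.
From mathcomp Require Import reals.
From mathcomp Require Import zify.
Import Order.TTheory GRing.Theory Num.Theory.
Local Open Scope ring_scope.

Lemma sum_sig (I : finType) (P : pred I) (V : nmodType) (F : I -> V) :
  \sum_(i | P i) F i = \sum_(u : {x : I | P x}) F (val u).
Proof.
rewrite (reindex_omap (val : {x : I | P x} -> I) insub); last first.
  by move=> x Px; rewrite insubT.
by apply: eq_bigl => x; rewrite valP valK eqxx.
Qed.

Theorem mainTheorem13 (R : realType) (C : based_complex R) (n : int)
  (a b : idx C) (g : 'M[R]_(cdim b, cdim a))
  (ha : cdeg a = n + 1) (hb : cdeg b = n)
  (hg1 : cbd a b *m g = 1%:M) (hg2 : g *m cbd a b = 1%:M)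
  (y : forall t : idx C, 'rV[R]_(cdim t))
  (hy : forall t, cdeg t != n - 1 -> y t = 0) :
  @bd_image R (idx C) (@cdim R C) (@cdeg R C) (@cbd R C) n y <->
  @bd_image R (morse_idx a b) (fun s : morse_idx a b => cdim (val s)) (fun s : morse_idx a b => cdeg (val s))
    (fun s t : morse_idx a b => morse_bd g (val s) (val t)) n
    (fun t : morse_idx a b => y (val t)).
Proof.
have cbdb : forall s, cdeg s = n -> cbd s b = 0.
  by move=> s hs; apply: bd_deg; rewrite hb hs; apply/eqP; lia.
have key : forall f : (forall s, 'rV[R]_(cdim s)), f a = 0 -> f b = 0 ->
    (forall s, cdeg s != n -> f s = 0) -> forall t,
    \sum_s f s *m cbd s t =
    \sum_(u : morse_idx a b) f (val u) *m morse_bd g (val u) t.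
  move=> f fa fb fs t.
  transitivity (\sum_(u : morse_idx a b) f (val u) *m cbd (val u) t).
    rewrite -(@sum_sig _ (fun s => (s != a) && (s != b)) _
                (fun s => f s *m cbd s t)).
    rewrite [RHS]big_mkcond /=; apply: eq_bigr => s _.
    by case: eqP => [->|_]; rewrite ?fa ?mul0mx //=; case: eqP => [->|_];
      rewrite ?fb ?mul0mx.
  apply: eq_bigr => u _.
  have [hu|hu] := eqVneq (cdeg (val u)) n.
    by rewrite /morse_bd cbdb // !mul0mx subr0.
  by rewrite fs // !mul0mx.
split.
- move=> [x [xs xe]].
  pose x2 := fun s => x s - x b *m g *m cbd a s.
  have xa : x a = 0 by apply: xs; rewrite ha; apply/eqP; lia.
  have x2a : x2 a = 0.
    by rewrite /x2 xa bd_deg ?mulmx0 ?subr0 // ha; apply/eqP; lia.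
  have x2b : x2 b = 0 by rewrite /x2 -mulmxA hg2 mulmx1 subrr.
  have x2s : forall s, cdeg s != n -> x2 s = 0.
    move=> s hs; rewrite /x2 xs // bd_deg ?mulmx0 ?subr0 //.
    by rewrite ha; move: hs => /eqP hs; apply/eqP; lia.
  exists (fun u => x2 (val u)); split.
    by move=> u hu; apply: x2s.
  move=> t; rewrite -key // xe; symmetry.
  rewrite (eq_bigr (fun s => x s *m cbd s (val t) -
      x b *m g *m (cbd a s *m cbd s (val t)))); last first.
    by move=> s _; rewrite /x2 /= mulmxBl mulmxA.
  by rewrite sumrB -mulmx_sumr bd_sq mulmx0 subr0.
- move=> [x' [xs xe]].
  pose x : forall s : idx C, 'rV[R]_(cdim s) := fun s : idx C =>
    match @idP ((s != a) && (s != b)) with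
    | ReflectT h => x' (exist _ s h)
    | ReflectF _ => 0 end.
  have xval : forall u, x (val u) = x' u.
    case=> s hs /=; rewrite /x; destruct idP as [h|h].
      by rewrite (bool_irrelevance h hs).
    by rewrite hs in h.
  have xa : x a = 0 by rewrite /x; destruct idP as [h|h] => //; exfalso; move: h; by rewrite eqxx.
  have xb : x b = 0 by rewrite /x; destruct idP as [h|h] => //; exfalso; move: h; by rewrite eqxx andbF.
  have xsupp : forall s, cdeg s != n -> x s = 0.
    by move=> s hs; rewrite /x; destruct idP as [h|h] => //; exact: (xs (exist _ s h) hs).
  exists x; split => // t.
  have [h|h] := boolP ((t != a) && (t != b)).
    have := xe (exist _ t h); rewrite /= => ->.
    rewrite key //; apply: eq_bigr => u _; by rewrite xval.
  have ht : cdeg t != n - 1.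
    move: h; rewrite negb_and !negbK => /orP [] /eqP ->;
      rewrite ?ha ?hb; apply/eqP; lia.
  rewrite hy // big1 // => s _.
  have [hs|hs] := eqVneq (cdeg s) n.
    by rewrite bd_deg ?mulmx0 // hs.
  by rewrite xsupp // mul0mx.
Qed.
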